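(* For all even $n\ge6$ with $\mathbf{s}=\mathbf{n}_{n/2}$, and for all odd $n=2m+1\ge7$ with $\mathbf{s}\in\{\mathbf{n}_m,\mathbf{n}_{m+1},\mathbf{n}_{m,m+1}\}$, $$|\lambda_{n,2,\mathbf{s}}|\le e^{-n}\quad\text{and}\quad|\lambda_{n,4,\mathbf{s}}|\le\tfrac12e^{-n}.$$ Moreover, for all odd $n=2m+1\ge7$, $$|\overline{\lambda}_{n,2,\mathbf{n}_m}|\le e^{-n}\quad\text{and}\quad|\overline{\lambda}_{n,4,\mathbf{n}_m}|\le\tfrac12e^{-n}.$$
   Context: With $(n)_t=n(n-1)\cdots(n-t+1)$, $\lambda_{n,b,s}=\sum_{t=0}^b\binom bt(-2)^t\frac{(s)_t}{(n)_t}$ and, for a vector $\mathbf{s}=(s_1,\dots,s_k)$, $\lambda_{n,b,\mathbf{s}}=\prod_{r=1}^k\lambda_{n,b,s_r}$. Let $\mathbf{n}=(1,2,\dots,n)$; $\mathbf{n}_l$ denotes $\mathbf{n}$ with its $l$-th component deleted, and $\mathbf{n}_{m,m+1}$ denotes $\mathbf{n}$ with components $m$ and $m+1$ deleted. For $n=2m+1$, $\overline{\lambda}_{n,b,\mathbf{n}_m}=\Big(\prod_{s\in\{1,\dots,n\}\setminus\{m,m+1\}}\lambda_{n,b,s}\Big)\cdot\tfrac12(\lambda_{n,b,m}+\lambda_{n,b,m+1})=\tfrac12(\lambda_{n,b,\mathbf{n}_m}+\lambda_{n,b,\mathbf{n}_{m+1}})$. *)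

(* Defs.v *)
From Stdlib Require Import Reals List Arith.
Import ListNotations.
Open Scope R_scope.

Fixpoint ffall (x : R) (t : nat) : R :=
  match t with
  | O => 1
  | S t' => ffall x t' * (x - INR t')
  end.

Definition lam (n b s : nat) : R :=
  fold_right Rplus 0
    (map (fun t => C b t * (-2) ^ t * (ffall (INR s) t / ffall (INR n) t))
         (seq 0 (S b))).

Definition lamv (n b : nat) (ss : list nat) : R :=
  fold_right Rmult 1 (map (lam n b) ss).

Definition nvec (n : nat) : list nat := seq 1 n.

(* delete the component equal to l (= the l-th component of nvec n) *)
Definition del (l : nat) (ss : list nat) : list nat :=
  filter (fun i => negb (Nat.eqb i l)) ss.

Definition lambar (n b m : nat) : R :=
  (lamv n b (del m (nvec n)) + lamv n b (del (m + 1) (nvec n))) / 2.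

(* Main.v *)
Require Import Defs.
From Stdlib Require Import Reals List Arith Lra Lia Psatz ZArith.
Import ListNotations.
Open Scope R_scope.

Definition P (f : nat -> R) (l : list nat) : R := fold_right Rmult 1 (map f l).
Definition Sm (f : nat -> R) (l : list nat) : R := fold_right Rplus 0 (map f l).

Lemma P_app f l1 l2 : P f (l1 ++ l2) = P f l1 * P f l2.
Proof. induction l1; unfold P in *; simpl; [ring|rewrite IHl1; ring]. Qed.

Lemma P_ext f g l : (forall x, In x l -> f x = g x) -> P f l = P g l.
Proof. induction l; intros H; unfold P in *; simpl; auto.
 rewrite H by (left; auto). rewrite IHl; auto. intros; apply H; right; auto. Qed.

Lemma P_mul f g l : P (fun x => f x * g x) l = P f l * P g l.
Proof. induction l; unfold P in *; simpl; [ring|rewrite IHl; ring]. Qed.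

Lemma P_abs f l : Rabs (P f l) = P (fun x => Rabs (f x)) l.
Proof. induction l; unfold P in *; simpl. apply Rabs_R1. rewrite Rabs_mult, IHl; auto. Qed.

Lemma P_nonneg f l : (forall x, In x l -> 0 <= f x) -> 0 <= P f l.
Proof. induction l; intros H; unfold P in *; simpl. lra.
 apply Rmult_le_pos. apply H; left; auto. apply IHl; intros; apply H; right; auto. Qed.

Lemma P_le f g l : (forall x, In x l -> 0 <= f x <= g x) -> P f l <= P g l.
Proof. induction l; intros H; unfold P in *; simpl. lra.
 apply Rmult_le_compat. apply H; left; auto.
 apply (P_nonneg f l); intros; apply H; right; auto.
 apply H; left; auto. apply IHl; intros; apply H; right; auto. Qed.

Lemma P_refl f c a len : (a + len <= S c)%nat ->
  P f (seq a len) = P (fun s => f (c - s)%nat) (seq (S c - a - len) len).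
Proof. revert a. induction len; intros a H. reflexivity.
 change (P f (seq a (S len))) with (f a * P f (seq (S a) len)).
 rewrite IHlen by lia. rewrite seq_S, P_app.
 replace (S c - S a - len)%nat with (S c - a - S len)%nat by lia.
 unfold P at 3; cbn [map fold_right].
 replace (c - (S c - a - S len + len))%nat with a by lia. ring. Qed.

Lemma filter_id (g : nat -> bool) l : (forall x, In x l -> g x = true) -> filter g l = l.
Proof. induction l; intros H; simpl; auto. rewrite H by (left; auto).
 rewrite IHl; auto. intros; apply H; right; auto. Qed.

Lemma del_seq a len k : (a <= k < a + len)%nat ->
  del k (seq a len) = seq a (k - a) ++ seq (S k) (a + len - S k).
Proof. intros H. unfold del.
 replace len with ((k - a) + S (a + len - S k))%nat at 1 by lia.
 rewrite seq_app, filter_app. simpl.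
 replace (a + (k - a))%nat with k by lia. rewrite Nat.eqb_refl. simpl.
 f_equal; apply filter_id; intros x Hx; apply in_seq in Hx;
 apply Bool.negb_true_iff, Nat.eqb_neq; lia. Qed.

Lemma amgm c f l : 0 < c -> (forall x, In x l -> 0 <= f x) ->
  P f l <= c ^ length l * exp (Sm f l / c - INR (length l)).
Proof. intros Hc. induction l; intros H; unfold P, Sm in *; cbn [map fold_right length pow].
 - replace (0/c - INR 0) with 0 by (simpl; field; lra). rewrite exp_0. lra.
 - rewrite S_INR.
   replace ((f a + fold_right Rplus 0 (map f l)) / c - (INR (length l) + 1))
     with ((f a / c - 1) + (fold_right Rplus 0 (map f l) / c - INR (length l))) by (field; lra).
   rewrite exp_plus.
   assert (H1 : f a <= c * exp (f a / c - 1)).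
   { pose proof (exp_ineq1_le (f a / c - 1)).
     replace (f a) with (c * (f a / c)) at 1 by (field; lra).
     apply Rmult_le_compat_l; lra. }
   replace (c * c ^ length l * (exp (f a / c - 1) * exp (fold_right Rplus 0 (map f l) / c - INR (length l))))
     with ((c * exp (f a / c - 1)) * (c ^ length l * exp (fold_right Rplus 0 (map f l) / c - INR (length l)))) by ring.
   apply Rmult_le_compat; auto.
   apply H; left; auto.
   apply (P_nonneg f l); intros; apply H; right; auto.
   apply IHl; intros; apply H; right; auto. Qed.

Lemma Sm_tel (g G : R -> R) a len : (forall x, G (x + 1) - G x = g x) ->
  Sm (fun s => g (INR s)) (seq a len) = G (INR (a + len)) - G (INR a).
Proof. intros HG. revert a. induction len; intros a; unfold Sm in *; cbn [seq map fold_right].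
 rewrite Nat.add_0_r; ring.
 rewrite IHlen. replace (a + S len)%nat with (S a + len)%nat by lia. rewrite S_INR. rewrite <- (HG (INR a)). ring. Qed.

Lemma Sm_ext f g l : (forall x, In x l -> f x = g x) -> Sm f l = Sm g l.
Proof. induction l; intros H; unfold Sm in *; simpl; auto.
 rewrite H by (left; auto). rewrite IHl; auto. intros; apply H; right; auto. Qed.

Lemma Sm_div f D l : D <> 0 -> Sm (fun x => f x / D) l = Sm f l / D.
Proof. intros HD; induction l; unfold Sm in *; simpl. field; auto. rewrite IHl; field; auto. Qed.

Lemma P_div f D l : D <> 0 -> P (fun x => f x / D) l = P f l / D ^ length l.
Proof. intros HD; induction l; unfold P in *; simpl. field. rewrite IHl; field; split; auto; apply pow_nonzero; auto. Qed.

Lemma exp_nat x k : exp (INR k * x) = exp x ^ k.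
Proof. induction k; cbn [pow]. simpl INR; rewrite Rmult_0_l; apply exp_0.
 rewrite S_INR, Rmult_plus_distr_r, exp_plus, IHk, Rmult_1_l; ring. Qed.

Lemma exp_bound n : (4/11)^n <= exp (- INR n).
Proof.
 replace (- INR n) with (INR n * (-1)) by ring. rewrite exp_nat. apply pow_incr. split. lra.
 replace (-1) with (INR 64 * (-1/64)) by (simpl; lra). rewrite exp_nat.
 pose proof (exp_ineq1_le (-1/64)).
 apply Rle_trans with ((63/64)^64). lra. apply pow_incr. lra. Qed.

Lemma geom h : (12 <= h)%nat -> 2 * (1/12)^(h-1) <= (4/11)^(2*h+1).
Proof. intros H. replace h with (12 + (h - 12))%nat by lia. generalize (h-12)%nat as k. intros k.
 replace (12 + k - 1)%nat with (11 + k)%nat by lia.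
 replace (2 * (12 + k) + 1)%nat with (25 + 2*k)%nat by lia.
 induction k. simpl. lra.
 replace (11 + S k)%nat with (S (11 + k)) by lia. replace (25 + 2 * S k)%nat with (S (S (25 + 2*k))) by lia.
 cbn [pow]. assert (0 <= (4/11)^(25+2*k)) by (apply pow_le; lra). lra. Qed.

Definition Ab (b : nat) (n d : R) : R :=
  match b with 2%nat => d^2 + n | _ => d^4 + (6*n-8)*d^2 + 3*n*(n-2) end.
Definition Db (b : nat) (n : R) : R :=
  match b with 2%nat => n*(n-1) | _ => n*(n-1)*(n-2)*(n-3) end.
Definition Fb (b : nat) (n d : R) : R :=
  match b with 2%nat => d^2 - n | _ => d^4 - (6*n-8)*d^2 + 3*n*(n-2) end.

Lemma INR_gt3 n : (4 <= n)%nat -> 3 < INR n.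
Proof. intros. replace 3 with (INR 3) by (simpl; lra). apply lt_INR; lia. Qed.

Lemma lam_cf n b s : (b = 2 \/ b = 4)%nat -> (4 <= n)%nat ->
  lam n b s = Fb b (INR n) (INR n - 2 * INR s) / Db b (INR n).
Proof. intros [-> | ->] Hn; pose proof (INR_gt3 n Hn);
 unfold lam, Fb, Db, C; simpl; field; repeat split; lra. Qed.

Lemma Db_pos b n : (b = 2 \/ b = 4)%nat -> 3 < n -> 0 < Db b n.
Proof. intros [-> | ->] Hn; unfold Db.
 apply Rmult_lt_0_compat; lra.
 repeat apply Rmult_lt_0_compat; lra. Qed.

Lemma Ab_nonneg b n d : (b = 2 \/ b = 4)%nat -> 2 <= n -> 0 <= Ab b n d.
Proof. intros [-> | ->] Hn; unfold Ab.
 pose proof (pow2_ge_0 d); lra.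
 assert (0 <= d^2) by apply pow2_ge_0. assert (0 <= d^4) by (replace (d^4) with ((d^2)^2) by ring; apply pow2_ge_0).
 assert (0 <= (6*n-8)*d^2) by (apply Rmult_le_pos; lra). assert (0 <= 3*n*(n-2)) by (apply Rmult_le_pos; lra). lra. Qed.

Lemma Fb_le b n d : (b = 2 \/ b = 4)%nat -> 2 <= n -> Rabs (Fb b n d) <= Ab b n d.
Proof. intros [-> | ->] Hn; unfold Ab, Fb; apply Rabs_le.
 pose proof (pow2_ge_0 d); lra.
 assert (0 <= d^2) by apply pow2_ge_0. assert (0 <= d^4) by (replace (d^4) with ((d^2)^2) by ring; apply pow2_ge_0).
 assert (0 <= (6*n-8)*d^2) by (apply Rmult_le_pos; lra). assert (0 <= 3*n*(n-2)) by (apply Rmult_le_pos; lra). lra. Qed.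

Definition y (n b s : nat) : R := Ab b (INR n) (INR n - 2 * INR s) / Db b (INR n).

Lemma lam_y n b s : (b = 2 \/ b = 4)%nat -> (4 <= n)%nat -> 0 <= Rabs (lam n b s) <= y n b s.
Proof. intros Hb Hn. pose proof (INR_gt3 n Hn). pose proof (Db_pos b (INR n) Hb H).
 split. apply Rabs_pos. rewrite lam_cf by auto. unfold y. unfold Rdiv. rewrite Rabs_mult.
 rewrite (Rabs_right (/ _)) by (left; apply Rinv_0_lt_compat; auto).
 apply Rmult_le_compat_r. left; apply Rinv_0_lt_compat; auto. apply Fb_le; auto; lra. Qed.

Lemma y_nonneg n b s : (b = 2 \/ b = 4)%nat -> (4 <= n)%nat -> 0 <= y n b s.
Proof. intros. pose proof (lam_y n b s H H0); lra. Qed.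

Lemma lam_sym n b s : (b = 2 \/ b = 4)%nat -> (4 <= n)%nat -> (s <= n)%nat -> lam n b (n - s) = lam n b s.
Proof. intros Hb Hn Hs. rewrite !lam_cf by auto. rewrite minus_INR by auto.
 f_equal. destruct Hb as [-> | ->]; unfold Fb; ring. Qed.

Lemma lam_n n b : (b = 2 \/ b = 4)%nat -> (4 <= n)%nat -> lam n b n = 1.
Proof. intros Hb Hn. pose proof (INR_gt3 n Hn). rewrite lam_cf by auto.
 destruct Hb as [-> | ->]; unfold Fb, Db; field; repeat split; lra. Qed.

Lemma div_le1 a D : 0 < D -> a <= D -> a / D <= 1.
Proof. intros. apply Rmult_le_reg_r with D; auto. unfold Rdiv. rewrite Rmult_assoc, Rinv_l by lra. lra. Qed.

Lemma lam_mid n b m : (b = 2 \/ b = 4)%nat -> n = (2*m+1)%nat -> (3 <= m)%nat -> Rabs (lam n b m) <= 1.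
Proof. intros Hb Hn Hm. assert (Hn4 : (4 <= n)%nat) by lia. pose proof (INR_gt3 n Hn4).
 assert (HN : INR n = 2 * INR m + 1) by (subst; rewrite plus_INR, mult_INR; simpl; ring).
 assert (INR n >= 7) by (subst; replace 7 with (INR 7) by (simpl; lra); apply Rle_ge, le_INR; lia).
 apply Rle_trans with (y n b m). apply lam_y; auto. unfold y.
 replace (INR n - 2 * INR m) with 1 by lra.
 pose proof (Db_pos b (INR n) Hb H). apply div_le1; auto.
 destruct Hb as [-> | ->]; unfold Ab, Db in *. nra.
 assert (0 <= INR n * INR n * ((INR n - 2) * (INR n - 4))).
 { apply Rmult_le_pos. nra. nra. }
 nra. Qed.

Lemma sq_bound n b h : (b = 2 \/ b = 4)%nat -> (4 <= n)%nat -> (1 <= h)%nat ->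
  P (fun x => Rabs (lam n b x)) (seq 1 (h-1)) * P (fun x => Rabs (lam n b x)) (seq 1 (h-1))
  <= P (fun s => y n b s * y n b (h - s)) (seq 1 (h-1)).
Proof. intros Hb Hn Hh. rewrite P_mul.
 assert (E: P (fun s => y n b (h-s)) (seq 1 (h-1)) = P (y n b) (seq 1 (h-1))).
 { rewrite (P_refl (y n b) h 1 (h-1)) by lia. replace (S h - 1 - (h-1))%nat with 1%nat by lia. reflexivity. }
 rewrite E.
 assert (H := P_le (fun x => Rabs (lam n b x)) (y n b) (seq 1 (h-1)) (fun x _ => lam_y n b x Hb Hn)).
 assert (H0 := P_nonneg (fun x => Rabs (lam n b x)) (seq 1 (h-1)) (fun x _ => Rabs_pos _)).
 apply Rmult_le_compat; auto. Qed.

Lemma P_single f a : P f [a] = f a.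
Proof. unfold P; simpl; ring. Qed.

Lemma seq1_S m : (1 <= m)%nat -> seq 1 m = seq 1 (m-1) ++ [m].
Proof. intros. replace m with (S (m-1)) at 1 by lia. rewrite seq_S. f_equal. f_equal. lia. Qed.

Lemma even_dec n h b : (b = 2 \/ b = 4)%nat -> n = (2*h)%nat -> (3 <= h)%nat ->
  Rabs (lamv n b (del h (nvec n))) <= P (fun s => y n b s * y n b (h - s)) (seq 1 (h-1)).
Proof. intros Hb Hn Hh. assert (Hn4 : (4 <= n)%nat) by lia.
 unfold lamv, nvec. change (fold_right Rmult 1 (map (lam n b) ?L)) with (P (lam n b) L).
 rewrite del_seq by lia. replace (1 + n - S h)%nat with (S (h-1)) by lia.
 rewrite seq_S, !P_app. replace (S h + (h-1))%nat with n by lia.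
 rewrite P_single, lam_n by auto.
 rewrite (P_refl (lam n b) n (S h) (h-1)) by lia.
 replace (S n - S h - (h-1))%nat with 1%nat by lia. replace (h - 1)%nat with (h - 1)%nat by lia.
 rewrite (P_ext (fun s => lam n b (n - s)) (lam n b)) by (intros x Hx; apply in_seq in Hx; apply lam_sym; auto; lia).
 replace (1 - 1)%nat with 0%nat by lia.
 rewrite Rmult_1_r, Rabs_mult, !P_abs. apply sq_bound; auto; lia. Qed.

Lemma odd_dec m b L : (b = 2 \/ b = 4)%nat -> (3 <= m)%nat ->
  (L = del m (nvec (2*m+1)) \/ L = del (m+1) (nvec (2*m+1)) \/ L = del (m + 1) (del m (nvec (2 * m + 1)))) ->
  Rabs (lamv (2*m+1) b L) <= P (fun s => y (2*m+1) b s * y (2*m+1) b (m - s)) (seq 1 (m-1)).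
Proof. intros Hb Hm HL. set (n := (2*m+1)%nat). assert (Hn4 : (4 <= n)%nat) by (unfold n; lia).
 pose proof (lam_mid n b m Hb eq_refl Hm) as Hmid.
 assert (Hsq := sq_bound n b m Hb Hn4 ltac:(lia)).
 set (f := lam n b). set (A := P (fun x => Rabs (f x)) (seq 1 (m-1))).
 assert (HA : 0 <= A) by (apply P_nonneg; intros; apply Rabs_pos).
 assert (Hsym : forall l, (forall x, In x l -> (x <= n)%nat) -> P (fun s => f (n - s)%nat) l = P f l).
 { intros l Hl. apply P_ext. intros x Hx. apply lam_sym; auto. }
 unfold lamv, nvec. change (fold_right Rmult 1 (map (lam n b) ?L)) with (P f L).
 destruct HL as [-> | [-> | ->]]; unfold nvec; fold n.
 - rewrite del_seq by lia. replace (1 + n - S m)%nat with (S m) by (unfold n; lia).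
   rewrite seq_S, !P_app. replace (S m + m)%nat with n by (unfold n; lia).
   rewrite P_single. unfold f at 3. rewrite lam_n by auto.
   rewrite (P_refl f n (S m) m) by (unfold n; lia). replace (S n - S m - m)%nat with 1%nat by (unfold n; lia).
   rewrite Hsym by (intros x Hx; apply in_seq in Hx; unfold n; lia).
   rewrite (seq1_S m) by lia. rewrite P_app, P_single. replace (m - 1)%nat with (m - 1)%nat by lia.
   rewrite !Rabs_mult, !P_abs. fold A. rewrite Rabs_R1.
   apply Rle_trans with (A * A); auto.
   assert (0 <= Rabs (f m)) by apply Rabs_pos. fold f in Hmid. assert (0 <= A*A) by nra. nra.
 - rewrite del_seq by lia. replace (m + 1 - 1)%nat with m by lia.
   replace (1 + n - S (m + 1))%nat with (S (m - 1)) by (unfold n; lia).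
   rewrite seq_S, !P_app. replace (S (m + 1) + (m - 1))%nat with n by (unfold n; lia).
   rewrite P_single. unfold f at 3. rewrite lam_n by auto.
   rewrite (P_refl f n (S (m+1)) (m-1)) by (unfold n; lia). replace (S n - S (m+1) - (m-1))%nat with 1%nat by (unfold n; lia).
   rewrite Hsym by (intros x Hx; apply in_seq in Hx; unfold n; lia).
   rewrite (seq1_S m) by lia. rewrite P_app, P_single.
   rewrite !Rabs_mult, !P_abs. fold A. rewrite Rabs_R1.
   apply Rle_trans with (A * A); auto.
   assert (0 <= Rabs (f m)) by apply Rabs_pos. fold f in Hmid. assert (0 <= A*A) by nra. nra.
 - rewrite del_seq by lia. replace (1 + n - S m)%nat with (S m) by (unfold n; lia).
   unfold del at 1. rewrite filter_app. fold (del (m+1) (seq 1 (m-1))). fold (del (m+1) (seq (S m) (S m))).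
   replace (del (m+1) (seq 1 (m-1))) with (seq 1 (m-1)) by (symmetry; apply filter_id; intros x Hx; apply in_seq in Hx; apply Bool.negb_true_iff, Nat.eqb_neq; lia).
   rewrite (del_seq (S m) (S m) (m+1)) by lia. replace (m + 1 - S m)%nat with 0%nat by lia. simpl (seq (S m) 0). rewrite app_nil_l.
   replace (S m + S m - S (m + 1))%nat with (S (m-1)) by lia.
   rewrite seq_S, !P_app. replace (S (m + 1) + (m - 1))%nat with n by (unfold n; lia).
   rewrite P_single. unfold f at 3. rewrite lam_n by auto.
   rewrite (P_refl f n (S (m+1)) (m-1)) by (unfold n; lia). replace (S n - S (m+1) - (m-1))%nat with 1%nat by (unfold n; lia).
   rewrite Hsym by (intros x Hx; apply in_seq in Hx; unfold n; lia).
   rewrite Rmult_1_r, !Rabs_mult, !P_abs. fold A. auto. Qed.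

Lemma exp_le x y : x <= y -> exp x <= exp y.
Proof. intros H. destruct (Rle_lt_or_eq_dec x y H). left; apply exp_increasing; auto. subst; lra. Qed.

Lemma large_gen n h b par (G : R -> R) :
 (b = 2 \/ b = 4)%nat -> (12 <= h)%nat -> (4 <= n)%nat -> INR n = 2*INR h + par ->
 (forall x, G (x+1) - G x = Ab b (INR n) (INR n - 2*x) * Ab b (INR n) (par + 2*x)) ->
 12*(G (INR h) - G 1) <= (INR h - 1) * (Db b (INR n))^2 ->
 P (fun s => y n b s * y n b (h - s)) (seq 1 (h-1)) <= (1/12)^(h-1).
Proof. intros Hb Hh Hn HN HG HS.
 pose proof (INR_gt3 n Hn). pose proof (Db_pos b (INR n) Hb H) as HD.
 set (D := Db b (INR n)) in *.
 eapply Rle_trans. apply (amgm (1/12)). lra. intros; apply Rmult_le_pos; apply y_nonneg; auto.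
 rewrite length_seq.
 rewrite <- (Rmult_1_r ((1/12)^(h-1))) at 2. apply Rmult_le_compat_l. apply pow_le; lra.
 apply Rle_trans with (exp 0); [|rewrite exp_0; lra]. apply exp_le.
 rewrite (Sm_ext _ (fun s => (fun x => Ab b (INR n) (INR n - 2*x) * Ab b (INR n) (par + 2*x)) (INR s) / D^2)).
 2:{ intros x Hx. apply in_seq in Hx. unfold y. fold D. rewrite minus_INR by lia.
     replace (INR n - 2*(INR h - INR x)) with (par + 2*INR x) by lra. field. lra. }
 rewrite Sm_div by (apply pow_nonzero; lra).
 rewrite (Sm_tel (fun x => Ab b (INR n) (INR n - 2*x) * Ab b (INR n) (par + 2*x)) G) by auto.
 replace (1 + (h-1))%nat with h by lia. rewrite minus_INR by lia. simpl (INR 1).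
 assert (0 < D^2) by (apply pow_lt; auto).
 replace ((G (INR h) - G 1) / D ^ 2 / (1 / 12)) with (12*(G (INR h) - G 1) / D^2) by (field; lra).
 cut (12 * (G (INR h) - G 1) / D ^ 2 <= INR h - 1). lra.
 apply Rmult_le_reg_r with (D^2); auto.
 replace (12 * (G (INR h) - G 1) / D ^ 2 * D^2) with (12 * (G (INR h) - G 1)) by (field; lra). lra. Qed.

Definition G02 (h x : R) : R := (-8/15)*x^1 + (16/3)*x^3 + (-8)*x^4 + (16/5)*x^5 + (8/3)*h^1*x^1 + (-16)*h^1*x^2 + (64/3)*h^1*x^3 + (-8)*h^1*x^4 + (44/3)*h^2*x^1 + (-16)*h^2*x^2 + (16/3)*h^2*x^3 + (8)*h^3*x^1.
Definition Q02 (t : R) : R := (517440) + (1807232/5)*t^1 + (85404)*t^2 + (9284)*t^3 + (480)*t^4 + (48/5)*t^5.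
Definition G04 (h x : R) : R := (-1408/21)*x^1 + (5120/9)*x^3 + (-512)*x^4 + (-1280/3)*x^5 + (512)*x^6 + (512/21)*x^7 + (-128)*x^8 + (256/9)*x^9 + (9792/35)*h^1*x^1 + (-3712/3)*h^1*x^2 + (-128)*h^1*x^3 + (8384/3)*h^1*x^4 + (-7296/5)*h^1*x^5 + (-2560/3)*h^1*x^6 + (5120/7)*h^1*x^7 + (-128)*h^1*x^8 + (46736/105)*h^2*x^1 + (2176)*h^2*x^2 + (-12928/3)*h^2*x^3 + (256)*h^2*x^4 + (14464/5)*h^2*x^5 + (-1536)*h^2*x^6 + (1536/7)*h^2*x^7 + (-7776/5)*h^3*x^1 + (5248/3)*h^3*x^2 + (2432)*h^3*x^3 + (-11840/3)*h^3*x^4 + (7936/5)*h^3*x^5 + (-512/3)*h^3*x^6 + (-2128/15)*h^4*x^1 + (-2432)*h^4*x^2 + (7808/3)*h^4*x^3 + (-896)*h^4*x^4 + (256/5)*h^4*x^5 + (896)*h^5*x^1 + (-768)*h^5*x^2 + (256)*h^5*x^3 + (192)*h^6*x^1.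
Definition Q04 (t : R) : R := (554410534656) + (16462709942912/35)*t^1 + (6141528831696/35)*t^2 + (3974945389808/105)*t^3 + (26065884688/5)*t^4 + (2378906256/5)*t^5 + (144026752/5)*t^6 + (39076224/35)*t^7 + (880384/35)*t^8 + (26368/105)*t^9.
Definition G12 (h x : R) : R := (52/15)*x^1 + (16/3)*x^3 + (-8)*x^4 + (16/5)*x^5 + (16)*h^1*x^1 + (-8)*h^1*x^2 + (16)*h^1*x^3 + (-8)*h^1*x^4 + (68/3)*h^2*x^1 + (-8)*h^2*x^2 + (16/3)*h^2*x^3 + (8)*h^3*x^1.
Definition Q12 (t : R) : R := (136752) + (1327952/5)*t^1 + (77372)*t^2 + (9060)*t^3 + (480)*t^4 + (48/5)*t^5.
Definition G14 (h x : R) : R := (-3184/105)*x^1 + (64)*x^2 + (1280/9)*x^3 + (-64)*x^4 + (-5248/15)*x^5 + (256)*x^6 + (2048/21)*x^7 + (-128)*x^8 + (256/9)*x^9 + (-1248/7)*h^1*x^1 + (-64/3)*h^1*x^2 + (-384)*h^1*x^3 + (3584/3)*h^1*x^4 + (-384)*h^1*x^5 + (-2560/3)*h^1*x^6 + (4608/7)*h^1*x^7 + (-128)*h^1*x^8 + (-9872/21)*h^2*x^1 + (1024)*h^2*x^2 + (-2560/3)*h^2*x^3 + (-1280)*h^2*x^4 + (2432)*h^2*x^5 + (-1280)*h^2*x^6 + (1536/7)*h^2*x^7 + (160/3)*h^3*x^1 + (448/3)*h^3*x^2 + (8192/3)*h^3*x^3 + (-9920/3)*h^3*x^4 + (1280)*h^3*x^5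 + (-512/3)*h^3*x^6 + (26672/15)*h^4*x^1 + (-1344)*h^4*x^2 + (6272/3)*h^4*x^3 + (-768)*h^4*x^4 + (256/5)*h^4*x^5 + (1280)*h^5*x^1 + (-384)*h^5*x^2 + (256)*h^5*x^3 + (192)*h^6*x^1.
Definition Q14 (t : R) : R := (738880198848) + (615058324544)*t^1 + (7833439209808/35)*t^2 + (4925117289968/105)*t^3 + (31281520016/5)*t^4 + (2759250192/5)*t^5 + (161202816/5)*t^6 + (6022272/5)*t^7 + (914688/35)*t^8 + (26368/105)*t^9.

Lemma T02 H x : G02 H (x+1) - G02 H x = Ab 2 (2*H+0) (2*H+0 - 2*x) * Ab 2 (2*H+0) (0 + 2*x).
Proof. cbv [G02 Ab]; field. Qed.

Lemma Q02_pos t : 0 <= t -> 0 <= Q02 t.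
Proof. intros Ht. unfold Q02.
   pose proof (pow_le t 1 Ht). pose proof (pow_le t 2 Ht). pose proof (pow_le t 3 Ht).
   pose proof (pow_le t 4 Ht). pose proof (pow_le t 5 Ht). pose proof (pow_le t 6 Ht).
   pose proof (pow_le t 7 Ht). pose proof (pow_le t 8 Ht). pose proof (pow_le t 9 Ht). lra. Qed.

Lemma S02 H : 12 <= H -> 12*(G02 H H - G02 H 1) <= (H - 1) * (Db 2 (2*H+0))^2.
Proof. intros HH.
 assert (E: (H - 1) * (Db 2 (2*H+0))^2 - 12*(G02 H H - G02 H 1) = Q02 (H - 12)) by (cbv [Q02 G02 Db]; field).
 pose proof (Q02_pos (H - 12) ltac:(lra)). lra. Qed.

Lemma T04 H x : G04 H (x+1) - G04 H x = Ab 4 (2*H+0) (2*H+0 - 2*x) * Ab 4 (2*H+0) (0 + 2*x).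
Proof. cbv [G04 Ab]; field. Qed.

Lemma Q04_pos t : 0 <= t -> 0 <= Q04 t.
Proof. intros Ht. unfold Q04.
   pose proof (pow_le t 1 Ht). pose proof (pow_le t 2 Ht). pose proof (pow_le t 3 Ht).
   pose proof (pow_le t 4 Ht). pose proof (pow_le t 5 Ht). pose proof (pow_le t 6 Ht).
   pose proof (pow_le t 7 Ht). pose proof (pow_le t 8 Ht). pose proof (pow_le t 9 Ht). lra. Qed.

Lemma S04 H : 12 <= H -> 12*(G04 H H - G04 H 1) <= (H - 1) * (Db 4 (2*H+0))^2.
Proof. intros HH.
 assert (E: (H - 1) * (Db 4 (2*H+0))^2 - 12*(G04 H H - G04 H 1) = Q04 (H - 12)) by (cbv [Q04 G04 Db]; field).
 pose proof (Q04_pos (H - 12) ltac:(lra)). lra. Qed.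

Lemma T12 H x : G12 H (x+1) - G12 H x = Ab 2 (2*H+1) (2*H+1 - 2*x) * Ab 2 (2*H+1) (1 + 2*x).
Proof. cbv [G12 Ab]; field. Qed.

Lemma Q12_pos t : 0 <= t -> 0 <= Q12 t.
Proof. intros Ht. unfold Q12.
   pose proof (pow_le t 1 Ht). pose proof (pow_le t 2 Ht). pose proof (pow_le t 3 Ht).
   pose proof (pow_le t 4 Ht). pose proof (pow_le t 5 Ht). pose proof (pow_le t 6 Ht).
   pose proof (pow_le t 7 Ht). pose proof (pow_le t 8 Ht). pose proof (pow_le t 9 Ht). lra. Qed.

Lemma S12 H : 12 <= H -> 12*(G12 H H - G12 H 1) <= (H - 1) * (Db 2 (2*H+1))^2.
Proof. intros HH.
 assert (E: (H - 1) * (Db 2 (2*H+1))^2 - 12*(G12 H H - G12 H 1) = Q12 (H - 12)) by (cbv [Q12 G12 Db]; field).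
 pose proof (Q12_pos (H - 12) ltac:(lra)). lra. Qed.

Lemma T14 H x : G14 H (x+1) - G14 H x = Ab 4 (2*H+1) (2*H+1 - 2*x) * Ab 4 (2*H+1) (1 + 2*x).
Proof. cbv [G14 Ab]; field. Qed.

Lemma Q14_pos t : 0 <= t -> 0 <= Q14 t.
Proof. intros Ht. unfold Q14.
   pose proof (pow_le t 1 Ht). pose proof (pow_le t 2 Ht). pose proof (pow_le t 3 Ht).
   pose proof (pow_le t 4 Ht). pose proof (pow_le t 5 Ht). pose proof (pow_le t 6 Ht).
   pose proof (pow_le t 7 Ht). pose proof (pow_le t 8 Ht). pose proof (pow_le t 9 Ht). lra. Qed.

Lemma S14 H : 12 <= H -> 12*(G14 H H - G14 H 1) <= (H - 1) * (Db 4 (2*H+1))^2.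
Proof. intros HH.
 assert (E: (H - 1) * (Db 4 (2*H+1))^2 - 12*(G14 H H - G14 H 1) = Q14 (H - 12)) by (cbv [Q14 G14 Db]; field).
 pose proof (Q14_pos (H - 12) ltac:(lra)). lra. Qed.

Lemma large_even b h : (b = 2 \/ b = 4)%nat -> (12 <= h)%nat ->
  P (fun s => y (2*h) b s * y (2*h) b (h-s)) (seq 1 (h-1)) <= (1/12)^(h-1).
Proof. intros Hb Hh. assert (HN: INR (2*h) = 2*INR h + 0) by (rewrite mult_INR; simpl; ring).
 assert (12 <= INR h) by (replace 12 with (INR 12) by (simpl; lra); apply le_INR; lia).
 destruct Hb as [-> | ->].
 - apply (large_gen (2*h) h 2 0 (G02 (INR h))); auto; try lia. intros x; rewrite HN; apply T02. rewrite HN; apply S02; lra.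
 - apply (large_gen (2*h) h 4 0 (G04 (INR h))); auto; try lia. intros x; rewrite HN; apply T04. rewrite HN; apply S04; lra.
Qed.

Lemma large_odd b h : (b = 2 \/ b = 4)%nat -> (12 <= h)%nat ->
  P (fun s => y (2*h+1) b s * y (2*h+1) b (h-s)) (seq 1 (h-1)) <= (1/12)^(h-1).
Proof. intros Hb Hh. assert (HN: INR (2*h+1) = 2*INR h + 1) by (rewrite plus_INR, mult_INR; simpl; ring).
 assert (12 <= INR h) by (replace 12 with (INR 12) by (simpl; lra); apply le_INR; lia).
 destruct Hb as [-> | ->].
 - apply (large_gen (2*h+1) h 2 1 (G12 (INR h))); auto; try lia. intros x; rewrite HN; apply T12. rewrite HN; apply S12; lra.
 - apply (large_gen (2*h+1) h 4 1 (G14 (INR h))); auto; try lia. intros x; rewrite HN; apply T14. rewrite HN; apply S14; lra.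
Qed.


Definition numZ (b n s : nat) : Z := let N := Z.of_nat n in let d := (N - 2 * Z.of_nat s)%Z in
  match b with 2%nat => (d*d - N)%Z | _ => (d*d*d*d - (6*N-8)*d*d + 3*N*(N-2))%Z end.
Definition denZ (b n : nat) : Z := let N := Z.of_nat n in
  match b with 2%nat => (N*(N-1))%Z | _ => (N*(N-1)*(N-2)*(N-3))%Z end.
Definition prodZ (b n : nat) (L : list nat) : Z := fold_right Z.mul 1%Z (map (numZ b n) L).

Lemma numZ_R b n s : (b = 2 \/ b = 4)%nat -> IZR (numZ b n s) = Fb b (INR n) (INR n - 2*INR s).
Proof. intros [-> | ->]; cbv [numZ Fb]; rewrite !INR_IZR_INZ;
 repeat (rewrite minus_IZR || rewrite mult_IZR || rewrite plus_IZR); ring. Qed.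

Lemma denZ_R b n : (b = 2 \/ b = 4)%nat -> IZR (denZ b n) = Db b (INR n).
Proof. intros [-> | ->]; cbv [denZ Db]; rewrite !INR_IZR_INZ;
 repeat (rewrite minus_IZR || rewrite mult_IZR || rewrite plus_IZR); ring. Qed.

Lemma prodZ_R b n L : IZR (prodZ b n L) = P (fun s => IZR (numZ b n s)) L.
Proof. induction L; unfold prodZ, P in *; simpl; auto. rewrite mult_IZR, IHL; auto. Qed.

Definition chk (b n : nat) (L : list nat) : bool :=
  Z.leb (Z.abs (prodZ b n L) * 11 ^ Z.of_nat n * 2) (4 ^ Z.of_nat n * denZ b n ^ Z.of_nat (length L)).

Lemma chk_ok b n L : (b = 2 \/ b = 4)%nat -> (4 <= n)%nat -> chk b n L = true ->
  Rabs (lamv n b L) <= / 2 * exp (- INR n).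
Proof. intros Hb Hn Hc. unfold chk in Hc. apply Z.leb_le, IZR_le in Hc.
 rewrite !mult_IZR, <- !pow_IZR, abs_IZR in Hc.
 pose proof (INR_gt3 n Hn). pose proof (Db_pos b (INR n) Hb H) as HD.
 unfold lamv. change (fold_right Rmult 1 (map (lam n b) L)) with (P (lam n b) L).
 rewrite (P_ext _ (fun s => IZR (numZ b n s) / IZR (denZ b n))).
 2:{ intros x _. rewrite lam_cf, numZ_R, denZ_R; auto. }
 rewrite P_div, <- prodZ_R. 2: { rewrite denZ_R by auto; apply Rgt_not_eq; auto. }
 rewrite denZ_R in * by auto. set (A := IZR (prodZ b n L)) in *. set (D := Db b (INR n)) in *.
 set (k := length L) in *.
 apply Rle_trans with (/2 * (4/11)^n). 2:{ apply Rmult_le_compat_l. lra. apply exp_bound. }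
 assert (HDk : 0 < D^k) by (apply pow_lt; auto).
 assert (H11 : 0 < 11^n) by (apply pow_lt; lra).
 unfold Rdiv. rewrite Rabs_mult, (Rabs_right (/ D^k)) by (left; apply Rinv_0_lt_compat; auto).
 apply Rmult_le_reg_r with (D^k * 11^n * 2). repeat apply Rmult_lt_0_compat; lra.
 replace (Rabs A * / D ^ k * (D ^ k * 11 ^ n * 2)) with (Rabs A * 11^n * 2) by (field; lra).
 replace (/ 2 * (4 * / 11) ^ n * (D ^ k * 11 ^ n * 2)) with (((4 * / 11) * 11)^n * D^k)
   by (rewrite Rpow_mult_distr; field; lra).
 replace (4 * / 11 * 11) with 4 by field. lra. Qed.

Definition checks_even h := let n := (2*h)%nat in andb (chk 2 n (del h (nvec n))) (chk 4 n (del h (nvec n))).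
Definition checks_odd m := let n := (2*m+1)%nat in
  forallb (fun L => andb (chk 2 n L) (chk 4 n L)) [del m (nvec n); del (m+1) (nvec n); del (m+1) (del m (nvec n))].

Lemma all_small : forallb checks_even (seq 3 9) = true /\ forallb checks_odd (seq 3 9) = true.
Proof. split; vm_compute; reflexivity. Qed.

Lemma fin h X n : X <= (1/12)^(h-1) -> (12 <= h)%nat -> (n = 2*h \/ n = 2*h+1)%nat -> X <= /2 * exp(- INR n).
Proof. intros HX Hh Hn. pose proof (geom h Hh). pose proof (exp_bound n).
 assert ((4/11)^(2*h+1) <= (4/11)^n).
 { destruct Hn as [-> | ->]; [|lra]. replace (2*h+1)%nat with (S (2*h)) by lia. cbn [pow].
   assert (0 <= (4/11)^(2*h)) by (apply pow_le; lra). lra. }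
 lra. Qed.

Lemma abs_avg a b E : Rabs a <= E -> Rabs b <= E -> Rabs ((a + b) / 2) <= E.
Proof. unfold Rabs; repeat destruct Rcase_abs; intros; lra. Qed.

Lemma part2 m : (7 <= 2 * m + 1)%nat ->
     forall s : list nat,
       s = del m (nvec (2 * m + 1)) \/
       s = del (m + 1) (nvec (2 * m + 1)) \/
       s = del (m + 1) (del m (nvec (2 * m + 1))) ->
     Rabs (lamv (2 * m + 1) 2 s) <= exp (- INR (2 * m + 1)) /\
     Rabs (lamv (2 * m + 1) 4 s) <= / 2 * exp (- INR (2 * m + 1)).
Proof. intros Hm s Hs.
 assert (Hb: forall b, (b = 2 \/ b = 4)%nat -> Rabs (lamv (2*m+1) b s) <= /2 * exp (- INR (2*m+1))).
 { intros b Hb. destruct (le_lt_dec 12 m).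
   - eapply fin. eapply Rle_trans. apply odd_dec; auto; lia. apply large_odd; auto. auto. right; auto.
   - destruct all_small as [_ E]. rewrite forallb_forall in E. specialize (E m ltac:(apply in_seq; lia)).
     unfold checks_odd in E. rewrite forallb_forall in E. specialize (E s).
     assert (HE : andb (chk 2 (2*m+1) s) (chk 4 (2*m+1) s) = true).
     { apply E. destruct Hs as [-> | [-> | ->]]; simpl; auto. }
     apply Bool.andb_true_iff in HE as [E2 E4]. destruct Hb as [-> | ->]; apply chk_ok; auto; lia. }
 split. pose proof (Hb 2%nat (or_introl eq_refl)); pose proof (exp_pos (- INR (2*m+1))); lra. apply Hb; auto. Qed.

Theorem lemma4p5 :
  (forall n : nat, (6 <= n)%nat -> Nat.Even n ->
     let s := del (n / 2) (nvec n) in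
     Rabs (lamv n 2 s) <= exp (- INR n) /\
     Rabs (lamv n 4 s) <= / 2 * exp (- INR n)) /\
  (forall m : nat, (7 <= 2 * m + 1)%nat ->
     forall s : list nat,
       s = del m (nvec (2 * m + 1)) \/
       s = del (m + 1) (nvec (2 * m + 1)) \/
       s = del (m + 1) (del m (nvec (2 * m + 1))) ->
     Rabs (lamv (2 * m + 1) 2 s) <= exp (- INR (2 * m + 1)) /\
     Rabs (lamv (2 * m + 1) 4 s) <= / 2 * exp (- INR (2 * m + 1))) /\
  (forall m : nat, (7 <= 2 * m + 1)%nat ->
     Rabs (lambar (2 * m + 1) 2 m) <= exp (- INR (2 * m + 1)) /\
     Rabs (lambar (2 * m + 1) 4 m) <= / 2 * exp (- INR (2 * m + 1))).
Proof.
 split; [|split].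
 - intros n Hn [h Hh] s. subst n. unfold s.
   replace (2*h/2)%nat with h by (rewrite Nat.mul_comm, Nat.div_mul; lia).
   assert (Hb: forall b, (b = 2 \/ b = 4)%nat -> Rabs (lamv (2*h) b (del h (nvec (2*h)))) <= /2 * exp (- INR (2*h))).
   { intros b Hb. destruct (le_lt_dec 12 h).
     - eapply fin. eapply Rle_trans. apply even_dec; auto; lia. apply large_even; auto. auto. left; auto.
     - destruct all_small as [E _]. rewrite forallb_forall in E. specialize (E h ltac:(apply in_seq; lia)).
       unfold checks_even in E. apply Bool.andb_true_iff in E as [E2 E4].
       destruct Hb as [-> | ->]; apply chk_ok; auto; lia. }
   split. pose proof (Hb 2%nat (or_introl eq_refl)); pose proof (exp_pos (- INR (2*h))); lra. apply Hb; auto.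
 - apply part2.
 - intros m Hm. unfold lambar.
   destruct (part2 m Hm _ (or_introl eq_refl)) as [A2 A4].
   destruct (part2 m Hm _ (or_intror (or_introl eq_refl))) as [B2 B4].
   split; apply abs_avg; auto.
Qed.
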